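(* Let $\tilde X\in\mathbb{R}^{n\times k}$, $\Gamma=\tilde X^t\tilde X$, $\alpha\in\mathbb{R}^k$, and let $\mathcal{I},\mathcal{C}$ be subsets of $\{1,\dots,k\}$. For each $\ell$ put $B(\mathcal{C})_\ell=\sum_{\ell'\in\mathcal{C},\,\ell'\neq\ell}\Gamma_{\ell\ell'}\alpha_{\ell'}$. Then $$\|B(\mathcal{C})\|_{\mathcal{I},2}^2\le 2\,\|\alpha\|_{\mathcal{C},1}^2\,r(\mathcal{I}).$$
   Context: $\mathcal{G}_1,\dots,\mathcal{G}_p$ is a partition of $\{1,\dots,k\}$ into groups with $t_j=\#\mathcal{G}_j$; each index $\ell$ is written $\ell=(j,t)$ with $j$ the group containing $\ell$ and $t\in\{1,\dots,t_j\}$ its rank inside $\mathcal{G}_j$. For $u\in\mathbb{R}^k$, $\|u\|_{\mathcal{I},1}=\sum_{\ell\in\mathcal{I}}|u_\ell|$, $\|u\|_{\mathcal{I},2}^2=\sum_{\ell\in\mathcal{I}}u_\ell^2$. $\gamma_{BT}=\sup\{|\Gamma_{(j,t)(j',t')}|: t\neq t'\}$ (over all $j,j'$ and admissible ranks), $\gamma_{BG}=\sup\{|\Gamma_{(j,t)(j',t)}|: j\ne j',\ t\le t_j\wedge t_{j'}\}$, and $r(\mathcal{I})=\#(\mathcal{I})\,\gamma_{BT}^2+\#\{j:\exists t,\ (j,t)\in\mathcal{I}\}\,\gamma_{BG}^2$. *)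

(* Defs.v *)
From HB Require Import structures.
From mathcomp Require Import all_boot all_order all_algebra.
Set Implicit Arguments. Unset Strict Implicit. Unset Printing Implicit Defensive.
Import Order.TTheory GRing.Theory Num.Theory.
Local Open Scope ring_scope.

(* Indices 1..k are represented by 'I_k; the partition G_1..G_p is given by the
   group map [grp : 'I_k -> 'I_p] (l belongs to G_(grp l)). *)

Definition rank_in (k p : nat) (grp : 'I_k -> 'I_p) (l : 'I_k) : nat :=
  #|[set l' : 'I_k | (grp l' == grp l) && (l' <= l)%N]|.

Definition gammaBT (R : realFieldType) (k p : nat) (grp : 'I_k -> 'I_p)
  (G : 'M[R]_k) : R :=
  \big[Num.max/0]_(l : 'I_k) \big[Num.max/0]_(l' : 'I_k |
      rank_in grp l != rank_in grp l') `|G l l'|.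

Definition gammaBG (R : realFieldType) (k p : nat) (grp : 'I_k -> 'I_p)
  (G : 'M[R]_k) : R :=
  \big[Num.max/0]_(l : 'I_k) \big[Num.max/0]_(l' : 'I_k |
      (grp l != grp l') && (rank_in grp l == rank_in grp l')) `|G l l'|.

(* r(I) = #I gamma_BT^2 + #{j : exists t, (j,t) in I} gamma_BG^2 *)
Definition rI (R : realFieldType) (k p : nat) (grp : 'I_k -> 'I_p)
  (G : 'M[R]_k) (I : {set 'I_k}) : R :=
  (#|I|%:R * gammaBT grp G ^+ 2 + #|grp @: I|%:R * gammaBG grp G ^+ 2).

Definition Bvec (R : realFieldType) (k : nat) (G : 'M[R]_k) (alpha : 'I_k -> R)
  (C : {set 'I_k}) (l : 'I_k) : R :=
  \sum_(l' in C | l' != l) G l l' * alpha l'.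

(* Main.v *)
Require Import Defs.
From HB Require Import structures.
From mathcomp Require Import all_boot all_order all_algebra.
From mathcomp Require Import lra.
Import Order.TTheory GRing.Theory Num.Theory.
Local Open Scope ring_scope.

Lemma rank_inj (k p : nat) (grp : 'I_k -> 'I_p) (a b : 'I_k) :
  grp a = grp b -> rank_in grp a = rank_in grp b -> a = b.
Proof.
suff H : forall a b : 'I_k, grp a = grp b -> (a < b)%N ->
    (rank_in grp a < rank_in grp b)%N.
  move=> g r; case: (ltngtP a b) => [ab|ba|/val_inj //].
  - by have := H a b g ab; rewrite r ltnn.
  - by have := H b a (esym g) ba; rewrite r ltnn.
move=> {}a {}b g ab; rewrite /rank_in; apply: proper_card.
rewrite properE; apply/andP; split.
  apply/subsetP => x; rewrite !inE g => /andP[-> xa] /=.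
  exact: leq_trans xa (ltnW ab).
apply/subsetPn; exists b; first by rewrite inE eqxx leqnn.
by rewrite inE g eqxx /= leqNgt ab.
Qed.

Lemma bigmax0_ge0 (R : realFieldType) (I : finType) (P : pred I) (F : I -> R) :
  0 <= \big[Num.max/0]_(i | P i) F i.
Proof. by elim/big_rec: _ => //= i x _ hx; rewrite le_max hx orbT. Qed.

Lemma sum_sub (R : realFieldType) (I : finType) (P Q : pred I) (F : I -> R) :
  (forall i, P i -> Q i) -> (forall i, Q i -> 0 <= F i) ->
  \sum_(i | P i) F i <= \sum_(i | Q i) F i.
Proof.
move=> PQ F0; rewrite [X in _ <= X](bigID P) /=.
rewrite (eq_bigl P); last by move=> i; case Pi: (P i); rewrite ?andbF ?andbT ?PQ.
by rewrite lerDl; apply: sumr_ge0 => i /andP[Qi _]; apply: F0.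
Qed.

Arguments rank_inj {k p grp a b}.
Arguments sum_sub {R I P Q F}.

Theorem lemma3 (R : realFieldType) (n k p : nat) (grp : 'I_k -> 'I_p)
  (grp_surj : forall j : 'I_p, exists l : 'I_k, grp l = j)
  (X : 'M[R]_(n, k)) (alpha : 'I_k -> R) (I C : {set 'I_k}) :
  let G := X^T *m X in
  \sum_(l in I) (Bvec G alpha C l) ^+ 2
    <= 2 * (\sum_(l in C) `|alpha l|) ^+ 2 * rI grp G I.
Proof.
cbv zeta; set G := X^T *m X.
set a := \sum_(l in C) `|alpha l|.
set T := gammaBT grp G.
set U := gammaBG grp G.
have a0 : 0 <= a by apply: sumr_ge0.
have T0 : 0 <= T by apply: bigmax0_ge0.
have U0 : 0 <= U by apply: bigmax0_ge0.
have hT : forall l l', rank_in grp l != rank_in grp l' -> `|G l l'| <= T.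
  move=> l l' h; apply: le_trans (le_bigmax _ _ l).
  exact: (le_bigmax_cond _ (P := fun l' => rank_in grp l != rank_in grp l') _ h).
have hU : forall l l', grp l != grp l' -> rank_in grp l == rank_in grp l' ->
    `|G l l'| <= U.
  move=> l l' h1 h2; apply: le_trans (le_bigmax _ _ l).
  apply: (le_bigmax_cond _ (P := fun l' => (grp l != grp l') &&
     (rank_in grp l == rank_in grp l')) _); by rewrite h1 h2.
pose S l := \sum_(l' in C | rank_in grp l' == rank_in grp l) `|alpha l'|.
have S0 : forall l, 0 <= S l by move=> l; apply: sumr_ge0.
have Sle : forall l, S l <= a.
  move=> l; apply: sum_sub => // i /andP[] //.
have key : forall l, Bvec G alpha C l ^+ 2 <= 2 * (T * a) ^+ 2 + 2 * (U * S l) ^+ 2.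
  move=> l; rewrite /Bvec (bigID (fun l' => rank_in grp l' != rank_in grp l)) /=.
  set B1 := \sum_(_ | _) _; set B2 := \sum_(_ | _) _.
  have h1 : `|B1| <= T * a.
    apply: le_trans (ler_norm_sum _ _ _) _.
    rewrite /a mulr_sumr.
    apply: (@le_trans _ _ (\sum_(i | ((i \in C) && (i != l)) &&
       (rank_in grp i != rank_in grp l)) T * `|alpha i|)).
      apply: ler_sum => i /andP[/andP[_ _] hr]; rewrite normrM.
      by apply: ler_wpM2r => //; apply: hT; rewrite eq_sym.
    apply: sum_sub.
    - by move=> i /andP[/andP[]].
    - by move=> i _; apply: mulr_ge0.
  have h2 : `|B2| <= U * S l.
    apply: le_trans (ler_norm_sum _ _ _) _.
    rewrite /S mulr_sumr.
    apply: (@le_trans _ _ (\sum_(i | ((i \in C) && (i != l)) &&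
       ~~ (rank_in grp i != rank_in grp l)) U * `|alpha i|)).
      apply: ler_sum => i /andP[/andP[_ ne] hr]; rewrite normrM.
      apply: ler_wpM2r => //; apply: hU; last by rewrite eq_sym negbK in hr *.
      apply/negP => /eqP e; move: ne; rewrite negbK in hr.
      by rewrite (rank_inj (esym e) (eqP hr)) eqxx.
    apply: sum_sub.
    - by move=> i /andP[/andP[-> _]]; rewrite negbK.
    - by move=> i _; apply: mulr_ge0.
  have e1 := real_normK (num_real B1).
  have e2 := real_normK (num_real B2).
  have n1 := normr_ge0 B1. have n2 := normr_ge0 B2.
  have p1 : 0 <= T * a by apply: mulr_ge0.
  have p2 : 0 <= U * S l by apply: mulr_ge0.
  have q1 : B1 ^+ 2 <= (T * a) ^+ 2.
    by rewrite -e1; apply: lerXn2r => //; rewrite nnegrE.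
  have q2 : B2 ^+ 2 <= (U * S l) ^+ 2.
    by rewrite -e2; apply: lerXn2r => //; rewrite nnegrE.
  have q3 : (B1 + B2) ^+ 2 <= 2 * B1 ^+ 2 + 2 * B2 ^+ 2.
    have := sqr_ge0 (B1 - B2); rewrite !expr2; lra.
  lra.
have hs : \sum_(l in I) S l ^+ 2 <= #|grp @: I|%:R * a ^+ 2.
  rewrite (partition_big_imset grp).
  apply: le_trans (_ : \sum_(j in grp @: I) a ^+ 2 <= _); last first.
    by rewrite sumr_const mulr_natl.
  apply: ler_sum => j _.
  apply: le_trans (_ : (\sum_(i in I | grp i == j) S i) * a <= _); last first.
    rewrite expr2; apply: ler_wpM2r => //.
    rewrite /S; under eq_bigr do rewrite big_mkcondr.
    rewrite exchange_big /=; apply: ler_sum => l' _.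
    rewrite -big_mkcondr.
    case: (pickP (fun i => ((i \in I) && (grp i == j)) &&
       (rank_in grp l' == rank_in grp i))) => [i0 H|H]; last first.
      by rewrite big_pred0.
    rewrite (bigD1 i0) //= big1 ?addr0 // => i /andP[/andP[/andP[_ /eqP gi] /eqP ri] ne].
    move: H => /andP[/andP[_ /eqP gi0] /eqP ri0].
    move: ne; rewrite (rank_inj (etrans gi (esym gi0)) (etrans (esym ri) ri0)).
    by rewrite eqxx.
  rewrite mulr_suml; apply: ler_sum => i _.
  by rewrite expr2; apply: ler_wpM2l.
apply: le_trans (ler_sum _ (fun l _ => key l)) _.
rewrite big_split /= sumr_const -mulr_sumr.
under eq_bigr do rewrite exprMn.
rewrite -mulr_sumr /rI -mulr_natr.
have N0 : (0 : R) <= #|I|%:R by [].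
have M0 : (0 : R) <= #|grp @: I|%:R by [].
set N := (#|I|%:R : R) in N0 *. set M := (#|grp @: I|%:R : R) in M0 hs *.
set Σ := \sum_(i in I) S i ^+ 2 in hs *.
have Hp : 0 <= U ^+ 2 * (M * a ^+ 2 - Σ) by apply: mulr_ge0; [apply: sqr_ge0 | rewrite subr_ge0].
rewrite -/T -/U -mulr_natr -/N !mul1r.
have E : U ^+ 2 * Σ <= U ^+ 2 * (M * a ^+ 2) by rewrite -subr_ge0 -mulrBr.
rewrite !expr2 in E *; nra.
Qed.
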